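(* Let $L$ be a frame. A filter $F\subseteq L$ is exact if and only if it is an intersection of filters of the form $\{a\in L\mid y\le a\vee x\}$ for some $x,y\in L$. More precisely, $F$ is exact if and only if $$F=\{a\in L\mid \forall x,y\in L\ \big((\forall f\in F,\ y\le f\vee x)\Rightarrow y\le a\vee x\big)\}.$$
   Context: A frame is a complete lattice $L$ with $(\bigvee A)\wedge b=\bigvee_{a\in A}(a\wedge b)$. A filter is a nonempty up-closed subset closed under finite meets. A meet $\bigwedge M$ ($M\subseteq L$) is exact if $(\bigwedge M)\vee b=\bigwedge_{a\in M}(a\vee b)$ for all $b\in L$; a filter is exact if it contains $\bigwedge M$ whenever $M\subseteq F$ and $\bigwedge M$ is exact. *)

(* Defs.v *)
Set Implicit Arguments.

Section FrameDefs.
Context {T : Type}.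

Definition join (Sup : (T -> Prop) -> T) (a b : T) : T := Sup (fun x => x = a \/ x = b).
Definition meet (Inf : (T -> Prop) -> T) (a b : T) : T := Inf (fun x => x = a \/ x = b).

Record is_frame (le : T -> T -> Prop) (Sup Inf : (T -> Prop) -> T) : Prop := {
  fr_refl : forall a, le a a;
  fr_trans : forall a b c, le a b -> le b c -> le a c;
  fr_antisym : forall a b, le a b -> le b a -> a = b;
  fr_Sup_ub : forall (A : T -> Prop) a, A a -> le a (Sup A);
  fr_Sup_least : forall (A : T -> Prop) b, (forall a, A a -> le a b) -> le (Sup A) b;
  fr_Inf_lb : forall (A : T -> Prop) a, A a -> le (Inf A) a;
  fr_Inf_greatest : forall (A : T -> Prop) b, (forall a, A a -> le b a) -> le b (Inf A);
  fr_distr : forall (A : T -> Prop) b,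
      meet Inf (Sup A) b = Sup (fun c => exists a, A a /\ c = meet Inf a b)
}.

Definition is_filter (le : T -> T -> Prop) (Sup Inf : (T -> Prop) -> T) (F : T -> Prop) : Prop :=
  (exists a, F a) /\
  (forall a b, F a -> le a b -> F b) /\
  (forall a b, F a -> F b -> F (meet Inf a b)).

Definition exact_meet (le : T -> T -> Prop) (Sup Inf : (T -> Prop) -> T) (M : T -> Prop) : Prop :=
  forall b, join Sup (Inf M) b = Inf (fun c => exists a, M a /\ c = join Sup a b).

Definition exact_filter (le : T -> T -> Prop) (Sup Inf : (T -> Prop) -> T) (F : T -> Prop) : Prop :=
  forall M : T -> Prop, (forall m, M m -> F m) -> exact_meet le Sup Inf M -> F (Inf M).

End FrameDefs.

(* Main.v *)
Require Import Defs.

Section S.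
Context (T : Type) (le : T -> T -> Prop) (Sup Inf : (T -> Prop) -> T)
  (HL : is_frame le Sup Inf).

Lemma jl a b : le a (join Sup a b).
Proof. apply (fr_Sup_ub HL). auto. Qed.
Lemma jr a b : le b (join Sup a b).
Proof. apply (fr_Sup_ub HL). auto. Qed.
Lemma jlub a b c : le a c -> le b c -> le (join Sup a b) c.
Proof. intros. apply (fr_Sup_least HL). intros x [->| ->]; auto. Qed.

Definition G (F : T -> Prop) a :=
  forall x y, (forall f, F f -> le y (join Sup f x)) -> le y (join Sup a x).

Lemma FG F a : F a -> G F a.
Proof. intros Fa x y H. apply H, Fa. Qed.

Lemma exactG F : is_filter le Sup Inf F -> exact_filter le Sup Inf F ->
  forall a, G F a -> F a.
Proof.
  intros HF HE a Ga.
  set (M := fun c => exists f, F f /\ c = join Sup f a).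
  assert (HM : forall c, M c -> F c).
  { intros c [f [Ff ->]]. destruct HF as [_ [Hu _]]. eapply Hu; [exact Ff| apply jl]. }
  assert (am : le a (Inf M)).
  { apply (fr_Inf_greatest HL). intros c [f [_ ->]]. apply jr. }
  assert (ma : le (Inf M) a).
  { eapply (fr_trans HL); [apply (Ga a)|].
    - intros f Ff. apply (fr_Inf_lb HL). exists f; auto.
    - apply jlub; apply (fr_refl HL). }
  assert (Heq : Inf M = a) by (apply (fr_antisym HL); auto).
  rewrite <- Heq. apply HE; [exact HM|].
  intros b. apply (fr_antisym HL).
  - apply (fr_Inf_greatest HL). intros c [c' [Mc' ->]].
    apply jlub; [|apply jr]. eapply (fr_trans HL); [apply (fr_Inf_lb HL); exact Mc'|apply jl].
  - eapply (fr_trans HL); [apply (Ga (join Sup a b))|].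
    + intros f Ff. eapply (fr_trans HL).
      * apply (fr_Inf_lb HL). exists (join Sup f a). split; [exists f; auto|reflexivity].
      * apply jlub; [apply jlub|].
        -- apply jl.
        -- eapply (fr_trans HL); [|apply jr]. apply jl.
        -- eapply (fr_trans HL); [|apply jr]. apply jr.
    + apply jlub.
      * rewrite Heq. apply jl.
      * apply jlub; [rewrite Heq; apply jl|apply jr].
Qed.

Lemma repr_exact F (S : T -> T -> Prop) :
  (forall a, F a <-> (forall x y, S x y -> le y (join Sup a x))) ->
  exact_filter le Sup Inf F.
Proof.
  intros HS M HM Hex. apply HS. intros x y Sxy.
  rewrite (Hex x). apply (fr_Inf_greatest HL). intros c [m [Mm ->]].
  apply HS; auto.
Qed.

End S.

Theorem mainTheorem6 (T : Type) (le : T -> T -> Prop) (Sup Inf : (T -> Prop) -> T)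
  (HL : is_frame le Sup Inf) (F : T -> Prop) (HF : is_filter le Sup Inf F) :
  (* exact iff an intersection of filters {a | y <= a \/ x} *)
  (exact_filter le Sup Inf F <->
     exists S : T -> T -> Prop,
       forall a, F a <-> (forall x y, S x y -> le y (join Sup a x))) /\
  (* the precise form *)
  (exact_filter le Sup Inf F <->
     forall a, F a <->
       (forall x y, (forall f, F f -> le y (join Sup f x)) -> le y (join Sup a x))).
Proof.
  assert (H1 : exact_filter le Sup Inf F -> forall a, F a <->
       (forall x y, (forall f, F f -> le y (join Sup f x)) -> le y (join Sup a x))).
  { intros HE a. split; [apply FG | apply (@exactG T le Sup Inf HL F HF HE)]. }
  split; split.
  - intros HE. eexists. exact (H1 HE).
  - intros [S HS]. exact (@repr_exact T le Sup Inf HL F S HS).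
  - exact H1.
  - intros H. exact (@repr_exact T le Sup Inf HL F _ H).
Qed.
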